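(* Fix $0<q<1$. For $t_0>\log(1/q)$ and $\varepsilon>0$ define $$\omega^*(\varepsilon;t_0)=\sup\{|T_q(G')-t_0|:\ G\in\mathcal G,\ T_q(G)=t_0,\ \|G-G'\|\le\varepsilon\},$$ the supremum being over such $G$ and cdfs $G'$. Then for each fixed $t_0>\log(1/q)$, $$\omega^*(\varepsilon;t_0)\le\frac{q}{\log(1/q)}\,t_0e^{t_0}\,\varepsilon\,(1+o(1))\quad\text{as }\varepsilon\to0.$$
   Context: $E(t)=1-e^{-t}$, $\bar E=1-E$, $\bar G=1-G$. $\mathcal G=\{E\#F:F$ a probability distribution on $[1,\infty)\}$ with $(E\#F)(t)=\int E(t/\mu)\,dF(\mu)$. FDR functional $T_q(G)=\inf\{t:\bar G(t)\ge\frac1q\bar E(t)\}$ for any cdf $G$. $\|G-G'\|=\sup_t|G(t)-G'(t)|$ (Kolmogorov–Smirnov distance). *)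

(* Defs.v *)
From HB Require Import structures.
From mathcomp Require Import all_boot all_order all_algebra.
From mathcomp Require Import all_classical all_reals all_analysis.
Set Implicit Arguments. Unset Strict Implicit. Unset Printing Implicit Defensive.
Import Order.TTheory GRing.Theory Num.Theory.
Import numFieldNormedType.Exports.
Local Open Scope classical_set_scope.
Local Open Scope ring_scope.

Section Defs.
Variable R : realType.

Definition Ecdf (t : R) : R := if 0 <= t then 1 - expR (- t) else 0.

Definition is_cdf (G : R -> R) : Prop :=
  {homo G : x y / x <= y} /\
  (forall t, G x @[x --> t^'+] --> G t) /\
  (G x @[x --> -oo] --> (0:R)) /\
  (G x @[x --> +oo] --> (1:R)).

(* the class  \mathcal G = { E # F : F a probability distribution on [1,oo) } *)
Definition in_calG (G : R -> R) : Prop :=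
  exists F : probability R R,
    F `[(1:R), +oo[%classic = 1%E /\
    forall t, (G t)%:E = (\int[F]_(mu in setT) (Ecdf (t / mu))%:E)%E.

Definition ksdist (G G' : R -> R) : \bar R :=
  ereal_sup (range (fun t => (`|G t - G' t|)%:E)).

(* FDR functional T_q(G) = inf { t : 1 - G t >= (1/q)(1 - E t) }, inf of empty = +oo *)
Definition Tq (q : R) (G : R -> R) : \bar R :=
  ereal_inf [set t%:E | t in [set t : R | q^-1 * (1 - Ecdf t) <= 1 - G t]].

Definition omega_star (q eps t0 : R) : \bar R :=
  ereal_sup [set (`| Tq q G' - t0%:E |)%E | G' in
    [set G' : R -> R | is_cdf G' /\
       exists G, in_calG G /\ Tq q G = t0%:E /\ (ksdist G G' <= eps%:E)%E]].
End Defs.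

(* Main.v *)
Require Import Defs.
From HB Require Import structures.
From mathcomp Require Import all_boot all_order all_algebra.
From mathcomp Require Import all_classical all_reals all_analysis.
From mathcomp Require Import measurable_realfun ring lra.
Import Order.TTheory GRing.Theory Num.Theory.
Import numFieldNormedType.Exports.
Local Open Scope classical_set_scope.
Local Open Scope ring_scope.

Set Implicit Arguments. Unset Strict Implicit.

Section SA.
Variable R : realType.

Lemma measurable_inv : measurable_fun [set: R] (@GRing.inv R).
Proof.
have -> : [set: R] = ~` [set 0] `|` [set 0] by rewrite setUC setUv.
have mC : measurable (~` [set (0:R)]) by apply: measurableC.
apply/(measurable_funU _ mC (measurable_set1 _)); split; last exact: measurable_fun_set1.
apply: open_continuous_measurable_fun.
  have -> : ~` [set (0:R)] = [set x | x != 0].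
    by apply/seteqP; split => x /=; move/eqP.
  exact: open_neq.
by move=> x; rewrite inE /= => /eqP x0; apply: inv_continuous.
Qed.

Lemma Ecdf_max (x : R) : Ecdf x = 1 - expR (- Num.max x 0).
Proof.
rewrite /Ecdf; case: ifPn => x0.
  by rewrite max_l.
by rewrite max_r ?oppr0 ?expR0 ?subrr // ltW // ltNge.
Qed.

Lemma measurable_Ecdf_comp (t : R) : measurable_fun [set: R] (fun mu => Ecdf (t / mu)).
Proof.
under eq_fun do rewrite Ecdf_max.
apply: measurable_funB => //.
apply: measurableT_comp => //.
apply: measurableT_comp => //.
apply: measurable_maxr => //.
apply: measurable_funM => //.
exact: measurable_inv.
Qed.

Lemma Ecdf_ge0 (x : R) : 0 <= Ecdf x.
Proof. by rewrite /Ecdf; case: ifPn => // x0; rewrite subr_ge0 expR_le1 oppr_le0. Qed.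
Lemma Ecdf_le1 (x : R) : Ecdf x <= 1.
Proof. by rewrite /Ecdf; case: ifPn => // x0; rewrite gerBl expR_ge0. Qed.

End SA.

Section SB.
Variable R : realType.

Lemma Ecdf_integrable (F : probability R R) (t : R) :
  F.-integrable setT (EFin \o (fun mu => Ecdf (t / mu))).
Proof.
apply: measurable_bounded_integrable => //.
- exact: (le_lt_trans (probability_le1 F measurableT) (ltry 1)).

- exact: measurable_Ecdf_comp.
- rewrite /bounded_near; near=> M => x _ /=.
  rewrite ger0_norm ?Ecdf_ge0 //; apply: (le_trans (Ecdf_le1 _)).
  by near: M; exact: nbhs_pinfty_ge.
Unshelve. all: end_near.
Qed.

Lemma INT (F : probability R R) (hF : F `[(1:R), +oo[%classic = 1%E) (G : R -> R)
  (hG : forall t, (G t)%:E = (\int[F]_(mu in setT) (Ecdf (t / mu))%:E)%E)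
  (a b g t1 t2 : R) :
  (forall mu, 1 <= mu -> a * Ecdf (t1/mu) + b * Ecdf (t2/mu) <= g) ->
  a * G t1 + b * G t2 <= g.
Proof.
move=> H.
pose D := `[(1:R), +oo[%classic.
have mD : measurable (`[(1:R), +oo[%classic) by [].
have mN : measurable (~` `[(1:R), +oo[%classic) by apply: measurableC.
have FN : F (~` `[(1:R), +oo[%classic) = 0%E.
  by rewrite (probability_setC F mD) hF -EFinB subrr.
have eqD t : (G t)%:E = (\int[F]_(mu in D) (Ecdf (t / mu))%:E)%E.
  rewrite hG (negligible_integral mN measurableT (Ecdf_integrable F t) FN).
  by rewrite setTD setCK.
have iD t : F.-integrable D (EFin \o (fun mu => Ecdf (t / mu))).
  exact: (integrableS _ _ _ (Ecdf_integrable F t)).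
have i1 : F.-integrable D (fun x => a%:E * (Ecdf (t1 / x))%:E)%E.
  exact: (integrableZl mD a (iD t1)).
have i2 : F.-integrable D (fun x => b%:E * (Ecdf (t2 / x))%:E)%E.
  exact: (integrableZl mD b (iD t2)).
rewrite -lee_fin EFinD !EFinM !eqD -(integralZl mD (iD t1)) -(integralZl mD (iD t2)) -(integralD mD i1 i2).
apply: (@le_trans _ _ (\int[F]_(mu in D) g%:E)%E).
  apply: (le_integral mD).
  - exact: integrableD.
  - exact: finite_measure_integrable_cst.
  move=> x; rewrite inE /D /= in_itv /= andbT => x1.
  by rewrite -!EFinM -EFinD lee_fin H.
rewrite integral_cst // [X in (_ * X)%E](_ : _ = 1%E); [by rewrite mule1 | exact: hF].
Qed.

End SB.

Section SC.
Variable R : realType.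

Lemma Ecdf_pos (t : R) : 0 <= t -> Ecdf t = 1 - expR (- t).
Proof. by rewrite /Ecdf => ->. Qed.

Definition hG (G : R -> R) (t : R) := expR t * (1 - G t).

Lemma hINT (F : probability R R) (hF : F `[(1:R), +oo[%classic = 1%E) (G : R -> R)
  (hG0 : forall t, (G t)%:E = (\int[F]_(mu in setT) (Ecdf (t / mu))%:E)%E)
  (al be ga t1 t2 : R) : 0 <= t1 -> 0 <= t2 ->
  (forall a, 0 <= a -> a <= 1 -> al * expR (t1 * a) + be * expR (t2 * a) <= ga) ->
  al * hG G t1 + be * hG G t2 <= ga.
Proof.
move=> t10 t20 H.
have := @INT R F hF G hG0 (- (al * expR t1)) (- (be * expR t2))
   (ga - al * expR t1 - be * expR t2) t1 t2.
rewrite /hG.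
have HH : forall mu, 1 <= mu -> - (al * expR t1) * Ecdf (t1 / mu) + - (be * expR t2) * Ecdf (t2 / mu) <=
      ga - al * expR t1 - be * expR t2.
  move=> mu mu1.
  have mu0 : 0 < mu by apply: lt_le_trans mu1.
  have ea t : 0 <= t -> expR t * (1 - Ecdf (t / mu)) = expR (t * (1 - mu^-1)).
    move=> t0; rewrite Ecdf_pos; last by rewrite divr_ge0 // ltW.
    have -> : 1 - (1 - expR (- (t / mu))) = expR (- (t / mu)) by ring.
    by rewrite -expRD mulrBr mulr1.
  have a0 : 0 <= 1 - mu^-1 by rewrite subr_ge0 invf_le1.
  have a1 : 1 - mu^-1 <= 1 by rewrite lerBlDr lerDl invr_ge0 ltW.
  have := H _ a0 a1; rewrite -(ea _ t10) -(ea _ t20).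
  lra.
move=> /(_ HH); lra.
Qed.

End SC.

Section SD.
Variable R : realType.

Lemma P2 (c t a : R) : 0 < c ->
  (ln c + 1) * expR (t * a) - c <= t * a * expR (t * a).
Proof.
move=> c0.
have h := expR_ge1Dx (ln c - t * a).
rewrite expRD lnK ?posrE // expRN in h.
have X0 := expR_gt0 (t * a).
have XY : expR (t * a) * (expR (t * a))^-1 = 1 by rewrite mulfV // gt_eqF.
set X := expR (t * a) in h X0 XY *.
set Y := X^-1 in h XY.
nra.
Qed.

Lemma PU (c t0 d a : R) : 0 < c -> 0 < t0 -> 0 <= d -> 0 <= a ->
  - expR ((t0 + d) * a) + (1 + d / t0 * (ln c + 1)) * expR (t0 * a) <= d * c / t0.
Proof.
move=> c0 t00 d0 a0.
have h2 := P2 (t0) a c0.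
have X0 := expR_gt0 (t0 * a).
have hE : expR ((t0 + d) * a) = expR (t0 * a) * expR (d * a) by rewrite -expRD mulrDl.
have hE2 := expR_ge1Dx (d * a).
rewrite hE.
set X := expR (t0 * a) in h2 X0 hE2 *.
set E := expR (d * a) in hE2 *.
have k : d / t0 * ((ln c + 1) * X - c) <= d / t0 * (t0 * a * X).
  by apply: ler_wpM2l => //; rewrite divr_ge0 // ltW.
rewrite (_ : d / t0 * (t0 * a * X) = d * a * X) in k; last by field; rewrite gt_eqF.
have -> : d * c / t0 = d / t0 * c by rewrite mulrAC.
have hh : X * (1 + d * a) <= X * E by rewrite ler_wpM2l // ltW.
set K := d / t0 in k *.
nra.
Qed.

Lemma PL (c t0 s a : R) : 0 < c -> 0 < t0 -> 0 <= s -> 0 <= a -> a <= 1 ->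
  expR ((t0 - s) * a) + (s / ((1 + s) * t0) * (ln c + 1) - 1) * expR (t0 * a)
    <= s / ((1 + s) * t0) * c.
Proof.
move=> c0 t00 s0 a0 a1.
have h2 := P2 (t0) a c0.
have X0 := expR_gt0 (t0 * a).
have Z0 := expR_gt0 ((t0 - s) * a).
have hE : expR (t0 * a) = expR ((t0 - s) * a) * expR (s * a).
  by rewrite -expRD -mulrDl subrK.
have hE2 := expR_ge1Dx (s * a).
set X := expR (t0 * a) in h2 X0 hE *.
set Z := expR ((t0 - s) * a) in Z0 hE *.
set E := expR (s * a) in hE hE2 *.
have h1 : Z * (1 + s * a) <= X by rewrite hE ler_wpM2l // ltW.
set K' := s / (1 + s).
have s1 : 0 < 1 + s by lra.
have K'0 : 0 <= K' by rewrite divr_ge0 // ltW.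
have K'1 : K' <= 1 by rewrite ler_pdivrMr // mul1r; lra.
have hK : (1 - K' * a) * (1 + s * a) - 1 = s ^+ 2 * a * (1 - a) / (1 + s).
  by rewrite /K'; field; rewrite gt_eqF.
have h3 : 1 <= (1 - K' * a) * (1 + s * a).
  have num : 0 <= s ^+ 2 * a * (1 - a).
    by apply: mulr_ge0; [apply: mulr_ge0 => //; exact: sqr_ge0 | lra].
  by rewrite -subr_ge0 hK; exact: divr_ge0 num (ltW s1).
have h4 : 0 <= 1 - K' * a by nra.
have h5 : Z <= X * (1 - K' * a) by nra.
have k : s / ((1 + s) * t0) * ((ln c + 1) * X - c) <= s / ((1 + s) * t0) * (t0 * a * X).
  by apply: ler_wpM2l => //; rewrite divr_ge0 // ?mulr_ge0 // ltW.
rewrite (_ : s / ((1 + s) * t0) * (t0 * a * X) = K' * a * X) in k; last first.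
  by rewrite /K'; field; rewrite !gt_eqF.
set K := s / ((1 + s) * t0) in k *.
nra.
Qed.

End SD.

Section SE.
Variable R : realType.

Lemma memS (q t y : R) : 0 <= t ->
  (q^-1 * (1 - Ecdf t) <= y) = (q^-1 <= expR t * y).
Proof.
move=> t0; rewrite Ecdf_pos // (_ : 1 - (1 - expR (- t)) = expR (- t)); last by ring.
by rewrite expRN mulrC ler_pdivrMl // expR_gt0.
Qed.

Section G.
Variables (F : probability R R) (hF : F `[(1:R), +oo[%classic = 1%E) (G : R -> R)
  (hG0 : forall t, (G t)%:E = (\int[F]_(mu in setT) (Ecdf (t / mu))%:E)%E).

Lemma hmono1 (s t : R) : 0 <= s -> s <= t -> hG G s <= hG G t.
Proof.
move=> s0 st.
have := @hINT R F hF G hG0 1 (-1) 0 s t s0 (le_trans s0 st).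
rewrite !mul1r mulN1r subr_le0; apply => a a0 a1.
by rewrite mul1r mulN1r subr_le0 ler_expR ler_wpM2r.
Qed.

Lemma hmono2 (s t : R) : 0 <= s -> s <= t -> hG G t <= expR (t - s) * hG G s.
Proof.
move=> s0 st.
have := @hINT R F hF G hG0 1 (- expR (t - s)) 0 t s (le_trans s0 st) s0.
rewrite mul1r mulNr subr_le0; apply => a a0 a1.
rewrite mul1r mulNr subr_le0 -expRD ler_expR; nra.
Qed.

Lemma G_ge0 (t : R) : 0 <= G t.
Proof.
have := @INT R F hF G hG0 (-1) 0 0 t t.
rewrite mul0r addr0 mulN1r oppr_le0; apply => mu _.
by rewrite mul0r addr0 mulN1r oppr_le0 Ecdf_ge0.
Qed.


Lemma core (q t0 delta eps : R) (hq0 : 0 < q) (hq1 : q < 1) (ht0 : ln q^-1 < t0)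
  (hd : 0 < delta) (he : 0 < eps) (he1 : eps < q^-1 - 1)
  (he2 : q / ln q^-1 * t0 * expR t0 * eps * (1 + delta) <= ln (1 + delta))
  (hT : Tq q G = t0%:E) (G' : R -> R) (hks : forall t, `|G t - G' t| <= eps) :
  exists r, Tq q G' = r%:E /\ `|r - t0| <= q / ln q^-1 * t0 * expR t0 * eps * (1 + delta).
Proof.
have c1 : 1 < q^-1 by rewrite invf_gt1.
have L0 : 0 < ln q^-1 by rewrite ln_gt0.
have t00 : 0 < t0 by apply: lt_trans ht0.
set c := q^-1 in c1 he1 *.
set L := ln c in L0 ht0 he2 *.
have c0 : 0 < c by apply: lt_trans c1.
set B := q / L * t0 * expR t0 * eps in he2 *.
have B0 : 0 < B.
  rewrite /B; apply: mulr_gt0 => //; apply: mulr_gt0; last exact: expR_gt0.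
  by apply: mulr_gt0 => //; exact: divr_gt0.
have key : c * L / t0 * B = eps * expR t0.
  rewrite /B /c; field.
  by rewrite !gt_eqF.
have F1 : forall t, q^-1 * (1 - Ecdf t) <= 1 - G t -> t0 <= t.
  move=> t ht; have : (Tq q G <= t%:E)%E.
    by apply: ereal_inf_lbound; exists t.
  by rewrite hT lee_fin.
have F2 : forall r, t0 < r -> exists t, q^-1 * (1 - Ecdf t) <= 1 - G t /\ t < r.
  move=> r tr; have : (Tq q G < r%:E)%E by rewrite hT lte_fin.
  by move=> /ereal_inf_lt [_ [t ht <-]]; rewrite lte_fin => tr'; exists t.
have h0 : hG G t0 = c.
  apply/eqP; rewrite eq_le; apply/andP; split.
  - rewrite leNgt; apply/negP => hc.
    set h := hG G t0 in hc *.
    have hpos : 0 < h by apply: lt_trans hc.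
    set tau := Num.min t0 ((h - c) / (2 * h)).
    have tau0 : 0 < tau.
      rewrite lt_min t00 /=; apply: divr_gt0; first by rewrite subr_gt0.
      by rewrite mulr_gt0.
    have taut0 : tau <= t0 by rewrite ge_min lexx.
    have tauh : tau <= (h - c) / (2 * h) by rewrite ge_min lexx orbT.
    have ht : h * tau <= (h - c) / 2.
      have -> : (h - c) / 2 = h * ((h - c) / (2 * h)) by field; rewrite gt_eqF.
      by rewrite ler_wpM2l // ltW.
    have nt : ~ (q^-1 * (1 - Ecdf (t0 - tau)) <= 1 - G (t0 - tau)).
      by move/F1; lra.
    have tt0 : 0 <= t0 - tau by lra.
    rewrite memS // in nt.
    have x1 : expR (t0 - tau) * (1 - G (t0 - tau)) < c by rewrite ltNge; apply/negP.
    have m := @hmono2 (t0 - tau) t0 tt0 ltac:(lra).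
    rewrite (_ : t0 - (t0 - tau) = tau) in m; last by ring.
    rewrite /hG -/h in m x1 *.
    set x := expR (t0 - tau) * (1 - G (t0 - tau)) in m x1.
    have E1 := expR_ge1Dx (- tau).
    have EE : expR tau * expR (- tau) = 1 by rewrite -expRD subrr expR0.
    have E0 := expR_gt0 (- tau).
    have E2 : h * expR (- tau) <= x.
      have := ler_wpM2r (ltW E0) m; rewrite [expR tau * x * _]mulrAC EE mul1r; done.
    nra.
  - rewrite leNgt; apply/negP => hc.
    set h := hG G t0 in hc *.
    set tau := (c - h) / (2 * c).
    have tau0 : 0 < tau by apply: divr_gt0; [rewrite subr_gt0 | rewrite mulr_gt0].
    have ct : c * tau = (c - h) / 2 by rewrite /tau; field; rewrite gt_eqF.
    have [t1 [ht1 t1lt]] := F2 (t0 + tau) ltac:(lra).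
    have t1ge := F1 _ ht1.
    have t10 : 0 <= t1 by lra.
    rewrite memS // in ht1.
    have m := hmono2 (ltW t00) t1ge.
    rewrite /hG -/h in m ht1.
    set u := t1 - t0 in m.
    have E1 := expR_ge1Dx (- u).
    have EE : expR u * expR (- u) = 1 by rewrite -expRD subrr expR0.
    have E0 := expR_gt0 (- u).
    have cm := le_trans ht1 m.
    have E2 : c * expR (- u) <= h.
      have := ler_wpM2r (ltW E0) cm; rewrite [expR u * h * _]mulrAC EE mul1r; done.
    have u1 : u < tau by rewrite /u; lra.
    nra.
have hks1 t : G' t <= G t + eps.
  by have := hks t; rewrite ler_norml; lra.
have hks2 t : G t - eps <= G' t.
  by have := hks t; rewrite ler_norml; lra.
set D := B * (1 + delta) in he2 *.
have D0 : 0 < D by rewrite mulr_gt0 // addr_gt0.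
have hU : c + D / t0 * c * L <= hG G (t0 + D).
  have := @hINT R F hF G hG0 (-1) (1 + D / t0 * (ln c + 1)) (D * c / t0) (t0 + D) t0
    ltac:(lra) (ltW t00).
  rewrite h0 -/L => H; have {H} := H (fun a a0 _ => ltac:(rewrite mulN1r; exact: (PU c0 t00 (ltW D0) a0))).
  have -> : D * c / t0 = D / t0 * c by rewrite mulrAC.
  lra.
have eD : expR D <= 1 + delta.
  by rewrite -[X in _ <= X]lnK ?posrE ?addr_gt0 // ler_expR.
have up : (Tq q G' <= (t0 + D)%:E)%E.
  apply: ge_ereal_inf; exists (t0 + D)%:E => //; exists (t0 + D) => //=.
  rewrite memS; last by lra.
  have e1 : D / t0 * c * L = (1 + delta) * (eps * expR t0).
    by rewrite -key /D; field; rewrite gt_eqF.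
  have e2 : expR (t0 + D) = expR t0 * expR D by rewrite expRD.
  have X0 := expR_gt0 t0.
  have := hks1 (t0 + D); rewrite /hG in hU => g1.
  have := hks2 (t0 + D) => g2.
  rewrite e2; rewrite e2 in hU.
  set X := expR t0 in e1 X0 hU *.
  set Y := expR D in eD hU *.
  have Y0 : 0 < Y by apply: expR_gt0.
  have XY0 : 0 <= X * Y by rewrite mulr_ge0 // ltW.
  have p1 : X * Y * (1 - G (t0 + D) - eps) <= X * Y * (1 - G' (t0 + D)).
    by apply: ler_wpM2l => //; lra.
  have p2 : eps * X * Y <= eps * X * (1 + delta).
    by apply: ler_wpM2l => //; rewrite mulr_ge0 // ltW.
  rewrite -/c; lra.
have low : ((t0 - B)%:E <= Tq q G')%E.
  apply: le_ereal_inf_tmp => _ [t ht <-]; rewrite lee_fin; rewrite /= in ht.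
  rewrite leNgt; apply/negP => tlt.
  have [tn|tp] := ltP t 0.
    move: ht; rewrite /Ecdf ifN; last by rewrite -ltNge.
    rewrite subr0 mulr1 -/c => ht.
    have := hks2 t; have := G_ge0 t; lra.
  rewrite memS // -/c in ht.
  set s := t0 - t.
  have sB : B < s by rewrite /s; lra.
  have s0 : 0 <= s by apply: ltW; apply: lt_trans sB.
  have st0 : s <= t0 by rewrite /s; lra.
  set K := s / ((1 + s) * t0).
  have hL : 1 * hG G (t0 - s) + (K * (ln c + 1) - 1) * hG G t0 <= K * c.
    apply: (@hINT R F hF G hG0 1 (K * (ln c + 1) - 1) (K * c) (t0 - s) t0).
    - by rewrite subr_ge0.
    - exact: ltW.
    move=> a a0 a1; rewrite mul1r; exact: PL.
  rewrite mul1r h0 (_ : t0 - s = t) -/L in hL; last by rewrite /s; ring.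
  have et : expR t0 = expR t * expR s by rewrite -expRD /s addrC subrK.
  have X0 := expR_gt0 t.
  have p1 : expR t * (1 - G' t) <= expR t * (1 - G t + eps).
    by apply: ler_wpM2l; [exact: ltW | have := hks2 t; lra].
  have k1 : K * c * L <= eps * expR t.
    rewrite /hG in hL; nra.
  have key2 : K * c * L * B * (1 + s) = s * (eps * expR t0).
    rewrite -key /K; field; rewrite !gt_eqF //; lra.
  have k2 : s * (eps * expR t0) <= eps * expR t * B * (1 + s).
    rewrite -key2; apply: ler_wpM2r; first lra.
    by apply: ler_wpM2r => //; exact: ltW.
  rewrite et in k2.
  have Es := expR_ge1Dx s.
  set Y := expR s in k2 Es.
  set X := expR t in k2 X0.
  have k3 : s * Y <= B * (1 + s).
    have k4 : eps * X * (s * Y) <= eps * X * (B * (1 + s)).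
      have -> : eps * X * (s * Y) = s * (eps * (X * Y)) by ring.
      by have -> : eps * X * (B * (1 + s)) = eps * X * B * (1 + s) by ring.
    by rewrite ler_pM2l in k4; rewrite ?mulr_gt0.
  nra.
move: up low; case: (Tq q G') => [r| |] //= up low.
exists r; split => //; rewrite ler_norml; rewrite !lee_fin in up low.
have : B <= D by rewrite /D; nra.
lra.
Qed.

End G.

Theorem lemma4p5_aux (q : R) (hq0 : 0 < q) (hq1 : q < 1)
  (t0 : R) (ht0 : ln (q^-1) < t0) :
  forall delta : R, 0 < delta ->
  exists eta : R, 0 < eta /\
    forall eps : R, 0 < eps -> eps < eta ->
      (omega_star q eps t0 <=
         ((q / ln (q^-1)) * t0 * expR t0 * eps * (1 + delta))%:E)%E.
Proof.
move=> delta hd.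
have c1 : 1 < q^-1 by rewrite invf_gt1.
have L0 : 0 < ln q^-1 by rewrite ln_gt0.
have t00 : 0 < t0 by apply: lt_trans ht0.
set A := q / ln q^-1 * t0 * expR t0 * (1 + delta).
have A0 : 0 < A.
  rewrite /A; apply: mulr_gt0; last by rewrite addr_gt0.
  apply: mulr_gt0; last exact: expR_gt0.
  by apply: mulr_gt0 => //; exact: divr_gt0.
have lD : 0 < ln (1 + delta) by rewrite ln_gt0 // ltrDl.
exists (Num.min (q^-1 - 1) (ln (1 + delta) / A)); split.
  by rewrite lt_min subr_gt0 c1 /= divr_gt0.
move=> eps he; rewrite lt_min => /andP [he1 he2].
have he2' : q / ln q^-1 * t0 * expR t0 * eps * (1 + delta) <= ln (1 + delta).
  rewrite ltr_pdivlMr // in he2.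
  have -> : q / ln q^-1 * t0 * expR t0 * eps * (1 + delta) = eps * A by rewrite /A; ring.
  exact: ltW.
apply: ge_ereal_sup => _ [G' [cdfG' [G [[F [hF hG0]] [hT hks]]]] <-].
have hks' t : `|G t - G' t| <= eps.
  have h : ((`|G t - G' t|)%:E <= ksdist G G')%E by apply: ereal_sup_ubound; exists t.
  by rewrite -lee_fin; exact: le_trans h hks.
have [r [-> hr]] := core hF hG0 hq0 hq1 ht0 hd he he1 he2' hT hks'.
by rewrite /= lee_fin.
Qed.

End SE.

Unset Implicit Arguments.

Theorem lemma4p5 (R : realType) (q : R) (hq0 : 0 < q) (hq1 : q < 1)
  (t0 : R) (ht0 : ln (q^-1) < t0) :
  forall delta : R, 0 < delta ->
  exists eta : R, 0 < eta /\
    forall eps : R, 0 < eps -> eps < eta ->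
      (omega_star q eps t0 <=
         ((q / ln (q^-1)) * t0 * expR t0 * eps * (1 + delta))%:E)%E.
Proof. exact: lemma4p5_aux. Qed.
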